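(* Let $\mathbb{K}$ be a field and let $P$ be a nonempty set of primes. Let $\mathcal F=\{f_n(q)\}_{n=1}^\infty$ be a solution of $f_{mn}(q)=f_m(q)f_n(q^m)$ (for all $m,n\in\mathbb N$) in $\mathbb{K}[q]$ with $\mathrm{supp}(\mathcal F)=S(P)$. Then there exist a set $P_H\supseteq P$ of primes and a solution $\mathcal H$ of the same functional equation with $\mathrm{supp}(\mathcal H)=S(P_H)$ such that the restriction of $\mathcal H$ to $S(P)$ equals $\mathcal F$ and $\mathcal H$ is maximal.
   Context: $\mathbb N=\{1,2,3,\dots\}$. $\mathrm{supp}(\mathcal F)=\{n\in\mathbb N: f_n(q)\ne0\}$. For a set $P$ of primes, $S(P)$ is the multiplicative semigroup of positive integers generated by $P$ (including $1$). If $\mathcal G=\{g_n\}$ is a solution with $\mathrm{supp}(\mathcal G)=S(P_G)$ and $P\subseteq P_G$ is nonempty, the restriction of $\mathcal G$ to $S(P)$ is the sequence $\{f_n\}$ with $f_n=g_n$ for $n\in S(P)$ and $f_n=0$ for $n\notin S(P)$; it is again a solution. A solution $\mathcal H$ with support $S(P_H)$ is called maximal if it is not the restriction of any solution $\mathcal G$ with support $S(P_G)$, $P_G\supsetneq P_H$, to $S(P_H)$. *)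

(* Defs.v *)
From mathcomp Require Import all_boot all_order all_algebra.
Set Implicit Arguments. Unset Strict Implicit. Unset Printing Implicit Defensive.
Import GRing.Theory.
Local Open Scope ring_scope.

Definition prime_set (P : nat -> Prop) : Prop := forall p, P p -> prime p.

Inductive Sgen (P : nat -> Prop) : nat -> Prop :=
  | Sgen_one : Sgen P 1
  | Sgen_mul : forall p n, P p -> Sgen P n -> Sgen P (p * n)%N.

Section Defs.
Variable K : fieldType.

(* f_{mn}(q) = f_m(q) f_n(q^m) for all m, n in N = {1,2,...};
   f 0 is irrelevant (N starts at 1). *)
Definition solution (f : nat -> {poly K}) : Prop :=
  forall m n : nat, (0 < m)%N -> (0 < n)%N ->
    f (m * n)%N = f m * (f n \Po 'X^m).

Definition has_support (f : nat -> {poly K}) (P : nat -> Prop) : Prop :=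
  forall n : nat, (0 < n)%N -> (f n != 0 <-> Sgen P n).

Definition restriction_of (g : nat -> {poly K}) (P : nat -> Prop)
    (f : nat -> {poly K}) : Prop :=
  forall n : nat, (0 < n)%N ->
    (Sgen P n -> f n = g n) /\ (~ Sgen P n -> f n = 0).

Definition maximal_solution (h : nat -> {poly K}) (PH : nat -> Prop) : Prop :=
  ~ exists (PG : nat -> Prop) (g : nat -> {poly K}),
      prime_set PG /\ (forall p, PH p -> PG p) /\ (exists p, PG p /\ ~ PH p) /\
      solution g /\ has_support g PG /\ restriction_of g PH h.
End Defs.

(* Main.v *)
Require Import Defs.
From mathcomp Require Import all_boot all_order all_algebra.
From mathcomp Require Import boolp classical_sets.
Import GRing.Theory.
Local Open Scope ring_scope.

Lemma Sgen_mono (Q Q' : nat -> Prop) n :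
  (forall p, Q p -> Q' p) -> Sgen Q n -> Sgen Q' n.
Proof. move=> H; elim=> [|p m Qp _ IH]; [exact: Sgen_one | exact: Sgen_mul (H _ Qp) IH]. Qed.

Lemma Sgen_dvd (Q : nat -> Prop) n p : prime_set Q -> Sgen Q n ->
  prime p -> (p %| n)%N -> Q p.
Proof.
move=> hQ; elim=> [|p' m Qp' _ IH] pp.
  by rewrite dvdn1 => /eqP p1; move: pp; rewrite p1.
rewrite Euclid_dvdM // => /orP[|]; last exact: IH.
by rewrite dvdn_prime2 // ?hQ // => /eqP ->.
Qed.

Lemma Sgen_of_dvd (Q : nat -> Prop) n : (0 < n)%N ->
  (forall p, prime p -> (p %| n)%N -> Q p) -> Sgen Q n.
Proof.
elim/ltn_ind: n => n IH npos H.
case: (ltnP 1 n) => [n1|n1]; last first.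
  have -> : n = 1%N by apply/eqP; rewrite eqn_leq n1 npos.
  exact: Sgen_one.
have pp := pdiv_prime n1; have pd := pdiv_dvd n.
rewrite -(divnK pd) mulnC; apply: Sgen_mul; first exact: H.
apply: IH.
- by apply: ltn_Pdiv => //; exact: prime_gt1.
- by rewrite divn_gt0 ?prime_gt0 // dvdn_leq.
- move=> q qp qd; apply: H => //; exact: dvdn_trans qd (dvdn_div pd).
Qed.

Lemma Sgen_mulE (Q : nat -> Prop) m n : prime_set Q -> (0 < m)%N -> (0 < n)%N ->
  Sgen Q (m * n)%N -> Sgen Q m /\ Sgen Q n.
Proof.
move=> hQ mp np H; split; apply: Sgen_of_dvd => // p pp pd;
  apply: (@Sgen_dvd Q (m * n)%N p hQ H pp).
  exact: dvdn_mulr pd.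
exact: dvdn_mull pd.
Qed.

Lemma Sgen_mulr (Q : nat -> Prop) m n : Sgen Q m -> Sgen Q n -> Sgen Q (m * n)%N.
Proof.
move=> Hm Hn; elim: Hm => [|p k Qp _ IH]; first by rewrite mul1n.
by rewrite -mulnA; apply: Sgen_mul.
Qed.

Section Main.
Variable K : fieldType.
Variable P : nat -> Prop.
Variable f : nat -> {poly K}.
Hypothesis hP : prime_set P.
Hypothesis hf : solution f.
Hypothesis hsupp : has_support f P.

Definition Pair := ((nat -> Prop) * (nat -> {poly K}))%type.

Definition valid (x : Pair) : Prop :=
  [/\ prime_set x.1, (forall p, P p -> x.1 p), solution x.2,
      has_support x.2 x.1 & restriction_of x.2 P f].

Definition ext (x y : Pair) : Prop :=
  (forall p, x.1 p -> y.1 p) /\ restriction_of y.2 x.1 x.2.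

Definition TT := {x : Pair | valid x}.
Definition RR : rel TT := fun s t => `[< ext (proj1_sig s) (proj1_sig t) >].

Lemma supp_zero (g : nat -> {poly K}) Q n : has_support g Q -> (0 < n)%N ->
  ~ Sgen Q n -> g n = 0.
Proof.
move=> hs np ns; case: (eqVneq (g n) 0) => // /(proj1 (hs n np)) H.
by exfalso; apply: ns.
Qed.

Lemma ext_refl x : valid x -> ext x x.
Proof.
case=> _ _ _ hs _; split=> // n np; split=> // ns; exact: supp_zero hs np ns.
Qed.

Lemma ext_trans x y z : valid x -> ext x y -> ext y z -> ext x z.
Proof.
case=> _ _ _ hs _ [s1 r1] [s2 r2]; split; first by move=> p /s1 /s2.
move=> n np; split; last exact: supp_zero hs np.
move=> Sn; rewrite (proj1 (r1 n np) Sn); apply: (proj1 (r2 n np)).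
exact: Sgen_mono s1 Sn.
Qed.

Definition PU (A : set TT) p := exists s, A s /\ (proj1_sig s).1 p.
Definition hU (A : set TT) n : {poly K} :=
  match pselect (exists s, A s /\ Sgen (proj1_sig s).1 n) with
  | left e => (proj1_sig (proj1_sig (cid e))).2 n
  | right _ => 0
  end.

Lemma hU_eq A : total_on A RR -> forall s n, A s -> (0 < n)%N ->
  Sgen (proj1_sig s).1 n -> hU A n = (proj1_sig s).2 n.
Proof.
move=> tot s n As np Ss; rewrite /hU; case: pselect => [e|ne]; last first.
  by exfalso; apply: ne; exists s.
case: (cid e) => s' [As' Ss'] /=.
case: (tot s s' As As') => /asboolP [sub res].
  by rewrite (proj1 (res n np) Ss).
by rewrite (proj1 (res n np) Ss').
Qed.

Arguments hU_eq {A} tot {s n}.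
Lemma chain_Sgen A : total_on A RR -> (exists s, A s) -> forall n,
  Sgen (PU A) n -> exists s, A s /\ Sgen (proj1_sig s).1 n.
Proof.
move=> tot [s0 As0] k; elim=> [|p n [s1 [As1 s1p]] _ [s2 [As2 s2n]]].
  by exists s0; split => //; exact: Sgen_one.
case: (tot s1 s2 As1 As2) => /asboolP [sub res].
  by exists s2; split => //; apply: Sgen_mul => //; exact: sub.
exists s1; split => //; apply: Sgen_mul => //; exact: Sgen_mono sub s2n.
Qed.

Arguments chain_Sgen {A} tot ne {n}.
Lemma hU_zero A n : ~ Sgen (PU A) n -> hU A n = 0.
Proof.
move=> H; rewrite /hU; case: pselect => [e|//]; exfalso.
case: e => s [As Ss]; apply: H; by apply: Sgen_mono Ss => p sp; exists s.
Qed.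

Arguments hU_zero {A n}.
Lemma union_valid A : total_on A RR -> (exists s, A s) -> valid (PU A, hU A).
Proof.
move=> tot [s0 As0]; have ne : exists s, A s by exists s0.
have [_ sub0 _ _ res0] := proj2_sig s0.
split => /=.
- by move=> p [s [_ sp]]; have [hs _ _ _ _] := proj2_sig s; exact: hs.
- by move=> p Pp; exists s0; split => //; exact: sub0.
- move=> m n mp np; case: (pselect (Sgen (PU A) (m * n)%N)) => [H|H].
    have [s [As Ss]] := chain_Sgen tot ne H.
    have [ps _ sol _ _] := proj2_sig s.
    have [Sm Sn] := Sgen_mulE _ _ _ ps mp np Ss.
    rewrite !(hU_eq tot As) //; last by rewrite muln_gt0 mp.
    exact: sol.
  rewrite hU_zero //; case: (pselect (Sgen (PU A) m)) => [Sm|Sm].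
    case: (pselect (Sgen (PU A) n)) => [Sn|Sn].
      by exfalso; apply: H; exact: Sgen_mulr.
    by rewrite (hU_zero Sn) comp_poly0 mulr0.
  by rewrite (hU_zero Sm) mul0r.
- move=> n np; split.
    move=> H; case: (pselect (Sgen (PU A) n)) => // ns.
    by rewrite hU_zero // eqxx in H.
  move=> H; have [s [As Ss]] := chain_Sgen tot ne H.
  rewrite (hU_eq tot As np Ss); have [_ _ _ hs _] := proj2_sig s.
  exact: (proj2 (hs n np)).
- move=> n np; split; last exact: supp_zero hsupp np.
  move=> Sn; rewrite (hU_eq tot As0 np); last exact: Sgen_mono sub0 Sn.
  exact: (proj1 (res0 n np) Sn).
Qed.

Arguments union_valid {A}.
Lemma valid0 : valid (P, f).
Proof. split => //= n np; split => // ns; exact: supp_zero hsupp np ns. Qed.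

Lemma exists_max : exists t, premaximal RR t.
Proof.
apply: (@ZL_preorder TT (exist _ _ valid0)).
- by move=> t; apply/asboolP; apply: ext_refl (proj2_sig t).
- move=> r s t /asboolP H1 /asboolP H2; apply/asboolP.
  exact: ext_trans (proj2_sig r) H1 H2.
- move=> A tot; case: (pselect (exists s, A s)) => [ne|ne].
    exists (exist _ _ (union_valid tot ne)) => s As; apply/asboolP; split => /=.
      by move=> p sp; exists s.
    move=> n np; split.
      by move=> Sn; rewrite (hU_eq tot As np Sn).
    by have [_ _ _ hs _] := proj2_sig s; exact: supp_zero hs np.
  by exists (exist _ _ valid0) => s As; exfalso; apply: ne; exists s.
Qed.

End Main.

Theorem mainTheorem8 (K : fieldType) (P : nat -> Prop)
  (hP : prime_set P) (hPne : exists p, P p)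
  (f : nat -> {poly K}) (hf : solution f) (hsupp : has_support f P) :
  exists (PH : nat -> Prop) (h : nat -> {poly K}),
    prime_set PH /\ (forall p, P p -> PH p) /\ solution h /\
    has_support h PH /\ restriction_of h P f /\ maximal_solution h PH.
Proof.
have [t tmax] := @exists_max K P f hP hf hsupp.
have [pH subH solH supH resH] := proj2_sig t.
exists (proj1_sig t).1, (proj1_sig t).2; do 5 (split => //).
move=> [PG [g [pG [sub [[p [PGp nPHp]] [sg [hsg rg]]]]]]].
have vu : @valid K P f (PG, g).
  split => //=.
  - by move=> q /subH /sub.
  - move=> n np; split; last exact: supp_zero hsupp np.
    move=> Sn; rewrite (proj1 (resH n np) Sn); apply: (proj1 (rg n np)).
    exact: Sgen_mono subH Sn.
have /asboolP [sub' _] := tmax (exist _ _ vu) (introT (asboolP _) (conj sub rg)).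
exact: nPHp (sub' p PGp).
Qed.
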